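(* Let $\mathbf{G}$ be an $n\times n$ real positive definite matrix that admits a decomposition $\mathbf{G}=\mathbf{D}-\mathbf{V}\mathbf{V}^T$, where $\mathbf{D}$ is an $n\times n$ diagonal matrix and $\mathbf{V}$ is an $n\times k$ real matrix with linearly independent columns. Let $\mathbf{a}^*$ be any minimizer of $f(\mathbf{a})=\mathbf{a}^T\mathbf{G}\mathbf{a}$ over $\mathbf{a}\in\mathbb{Z}^n\setminus\{\mathbf{0}\}$. Then: (a) either $\mathbf{a}^*=\pm\mathbf{u}_i$ for some $i$, or there exists $\mathbf{x}\in\mathbb{R}^k$ such that, elementwise, $$\mathbf{a}^*-\tfrac12\mathbf{1}<\mathbf{D}^{-1}\mathbf{V}\mathbf{x}<\mathbf{a}^*+\tfrac12\mathbf{1},$$ and hence $\mathbf{a}^*=\lfloor\mathbf{D}^{-1}\mathbf{V}\mathbf{x}\rceil$ (componentwise rounding to the nearest integer); (b) $\|\mathbf{a}^*\|\le\sqrt{G_{\min}/\lambda_{\min}}$, where $G_{\min}$ is the smallest diagonal entry of $\mathbf{G}$ and $\lambda_{\min}$ the smallest eigenvalue of $\mathbf{G}$.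
   Context: Such a decomposition is called a $DP^k$ decomposition ($\mathbf{P}=\mathbf{V}\mathbf{V}^T$ is positive semidefinite of rank $k$); since $\mathbf{G}$ is positive definite and $\mathbf{P}$ positive semidefinite, all diagonal entries of $\mathbf{D}$ are strictly positive, so $\mathbf{D}^{-1}$ exists. $\mathbf{1}$ is the all-ones vector, $\mathbf{u}_i$ the $i$-th standard unit vector of $\mathbb{R}^n$, $\|\cdot\|$ the Euclidean norm; vector inequalities are elementwise. *)

(* Defs.v *)
(* Real numbers are modelled by an arbitrary real closed field R. *)
From HB Require Import structures.
From mathcomp Require Export all_boot all_order all_algebra.
Set Implicit Arguments. Unset Strict Implicit. Unset Printing Implicit Defensive.
Import Order.TTheory GRing.Theory Num.Theory.
Local Open Scope ring_scope.

Definition intvec (R : rcfType) (n : nat) (a : 'cV[int]_n) : 'cV[R]_n :=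
  map_mx (fun z : int => z%:~R) a.

Definition qform (R : rcfType) (n : nat) (G : 'M[R]_n) (x : 'cV[R]_n) : R :=
  (x^T *m G *m x) 0 0.

Definition posdef (R : rcfType) (n : nat) (G : 'M[R]_n) : Prop :=
  G^T = G /\ forall x : 'cV[R]_n, x != 0 -> 0 < qform G x.

Definition int_minimizer (R : rcfType) (n : nat) (G : 'M[R]_n) (a : 'cV[int]_n) : Prop :=
  a != 0 /\ forall b : 'cV[int]_n, b != 0 -> qform G (intvec R a) <= qform G (intvec R b).

Definition enorm (R : rcfType) (n : nat) (x : 'cV[R]_n) : R :=
  Num.sqrt (\sum_(i < n) x i 0 ^+ 2).

(* Main.v *)
Require Import Defs.
From HB Require Import structures.
From mathcomp Require Import all_boot all_order all_algebra.
From mathcomp Require Import complex ring lra zify.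
Import Order.TTheory GRing.Theory Num.Theory.
Local Open Scope ring_scope.

Section Ray.
Variable R : rcfType.
Local Notation C := (R[i]).
Local Notation toC := (real_complex R).

Lemma toC_real (r : R) : (r%:C)%C \is Num.real.
Proof. have := complexRe (r%:C)%C => /= ->; exact: Creal_Re. Qed.

Lemma rayleigh n (G : 'M[R]_n) (lmin : R) :
  G^T = G -> (forall mu, eigenvalue G mu -> lmin <= mu) ->
  forall x : 'cV[R]_n, lmin * (x^T *m x) 0 0 <= (x^T *m G *m x) 0 0.
Proof.
move=> Gsym Gmin x.
pose A := map_mx toC G.
have Aherm : A \is hermsymmx.
  apply: realsym_hermsym.
    apply/is_hermitianmxP; rewrite expr0 scale1r map_mx_id //.
    by rewrite /A map_trmx Gsym.
  by apply/mxOverP => i j; rewrite mxE toC_real.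
pose P := spectralmx A; pose d := spectral_diag A.
have Pu : P \is unitarymx := spectral_unitarymx A.
have AE : A = invmx P *m diag_mx d *m P.
  exact/orthomx_spectralP/hermitian_normalmx.
have dreal := hermitian_spectral_diag_real Aherm.
have dge j : (lmin%:C)%C <= d 0 j.
  have dj : d 0 j = toC (complex.Re (d 0 j)).
    by rewrite complexRe; apply/esym/Creal_ReP/(mxOverP dreal).
  have ev : eigenvalue A (d 0 j).
    apply/eigenvalueP; exists (delta_mx 0 j *m P).
      rewrite AE !mulmxA mulmxK ?spectral_unit // scalemxAl; congr (_ *m _).
      apply/matrixP => a b; rewrite mul_mx_diag !mxE ord1.
      by rewrite eqxx /=; case: (b =P j) => [->|_]; rewrite ?mulr1 ?mul1r ?mul0r ?mulr0.
    apply/eqP => /(congr1 (mulmx^~ (invmx P))); rewrite mulmxK ?spectral_unit // mul0mx.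
    by move/matrixP/(_ 0 j); rewrite !mxE !eqxx /= => /eqP; rewrite oner_eq0.
  move: ev; rewrite {1}dj eigenvalue_root_char /A -map_char_poly fmorph_root -eigenvalue_root_char.
  move=> /Gmin; rewrite -lecR => H; apply: le_trans H _; rewrite {2}dj.
  exact: lexx.
pose xc := map_mx toC x.
pose y := P *m xc.
have xcJ : map_mx Num.conj xc = xc.
  by apply/matrixP => i j; rewrite !mxE conj_Creal ?toC_real.
have zE : xc^T *m (P ^t* )%sesqui = (map_mx Num.conj y)^T.
  rewrite /y map_mxM xcJ trmx_mul map_trmx.
  by rewrite map_trmx.
have key : ((x^T *m G *m x) 0 0)%:C%C = \sum_j (y j 0)^* * d 0 j * y j 0.
  transitivity ((map_mx toC (x^T *m G *m x)) 0 0); first by rewrite [RHS]mxE.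
  rewrite map_mxM map_mxM -map_trmx -/A -/xc.
  rewrite AE invmx_unitary // !mulmxA zE -mulmxA -/y mxE.
  by apply: eq_bigr => j _; rewrite mul_mx_diag !mxE.
have key2 : ((x^T *m x) 0 0)%:C%C = \sum_j (y j 0)^* * y j 0.
  transitivity ((map_mx toC (x^T *m x)) 0 0); first by rewrite [RHS]mxE.
  rewrite map_mxM -map_trmx -/xc.
  rewrite -{1}(mulmxKtV xc^T Pu) // zE -mulmxA -/y mxE.
  by apply: eq_bigr => j _; rewrite !mxE.
rewrite -lecR rmorphM /= key key2 mulr_sumr; apply: ler_sum => j _.
rewrite mulrC -mulrA [d 0 j * _]mulrC mulrA mulrC [X in _ <= X]mulrC.
apply: ler_wpM2r; last exact: dge.
by rewrite mulrC mul_conjC_ge0.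
Qed.
End Ray.

Section Aux.
Variable R : rcfType.

Lemma intvecD n (a b : 'cV[int]_n) : intvec R (a + b) = intvec R a + intvec R b.
Proof. by apply/matrixP => i j; rewrite !mxE intrD. Qed.

Lemma intvecN n (a : 'cV[int]_n) : intvec R (- a) = - intvec R a.
Proof. by apply/matrixP => i j; rewrite !mxE intrN. Qed.

Lemma intvec_delta n (i : 'I_n) : intvec R (delta_mx i 0) = delta_mx i 0.
Proof. by apply/matrixP => k j; rewrite !mxE; case: (_ && _). Qed.

Lemma qform_pert n (G : 'M[R]_n) (u : 'cV[R]_n) (s : R) (i : 'I_n) :
  G^T = G ->
  qform G (u + s *: delta_mx i 0) =
  qform G u + 2 * s * (G *m u) i 0 + s ^+ 2 * G i i.
Proof.
move=> Gs; rewrite /qform; set e := delta_mx i 0 : 'cV[R]_n.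
have eT : e^T = delta_mx 0 i by rewrite trmx_delta.
have h1 : (u^T *m G *m e) 0 0 = (G *m u) i 0.
  transitivity ((u^T *m G *m e)^T 0 0); first by rewrite [RHS]mxE.
  rewrite !trmx_mul trmxK Gs eT.
by rewrite -rowE mxE.
have h2 : (e^T *m G *m u) 0 0 = (G *m u) i 0.
  by rewrite eT -mulmxA -rowE mxE.
have h3 : (e^T *m G *m e) 0 0 = G i i.
  by rewrite eT -rowE -colE !mxE.
have -> : (u + s *: e)^T = u^T + s *: e^T by apply/matrixP => a b; rewrite !mxE.
rewrite !mulmxDl !mulmxDr -!scalemxAl -!scalemxAr.
have E1 : forall (A B : 'M[R]_1), (A + B) 0 0 = A 0 0 + B 0 0 by move=> *; rewrite mxE.
have E2 : forall (A : 'M[R]_1) c, (c *: A) 0 0 = c * A 0 0 by move=> *; rewrite mxE.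
rewrite !E1 !E2 h1 h2 h3; ring.
Qed.
End Aux.

Theorem theorem2 (R : rcfType) (n k : nat) (G D : 'M[R]_n) (V : 'M[R]_(n, k))
  (hG : posdef G) (hD : is_diag_mx D) (hV : row_free V^T)
  (hdec : G = D - V *m V^T)
  (a : 'cV[int]_n) (ha : int_minimizer G a) :
  ((exists i : 'I_n, a = delta_mx i 0 \/ a = - delta_mx i 0) \/
   (exists x : 'cV[R]_k, forall i : 'I_n,
      (a i 0)%:~R - 2^-1 < (invmx D *m V *m x) i 0 /\
      (invmx D *m V *m x) i 0 < (a i 0)%:~R + 2^-1))
  /\
  (forall (Gmin lmin : R),
     (exists i : 'I_n, Gmin = G i i) -> (forall i : 'I_n, Gmin <= G i i) ->
     eigenvalue G lmin -> (forall mu : R, eigenvalue G mu -> lmin <= mu) ->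
     enorm (intvec R a) <= Num.sqrt (Gmin / lmin)).
Proof.
have [Gsym Gpd] := hG.
have [anz amin] := ha.
set u := intvec R a.
have [dd Ddef] := diag_mxP _ hD.
have ddE i : dd 0 i = D i i by rewrite Ddef mxE eqxx mulr1n.
have hGii i : qform G (delta_mx i 0) = G i i.
  by rewrite /qform trmx_delta -rowE -colE !mxE.
have dnz i : (delta_mx i 0 : 'cV[R]_n) != 0.
  apply/negP => /eqP/matrixP/(_ i 0); rewrite !mxE !eqxx /= => /eqP.
  by rewrite oner_eq0.
have Gii_pos i : 0 < G i i by rewrite -hGii; apply: Gpd.
have Dii i : G i i = D i i - \sum_j V i j ^+ 2.
  rewrite hdec !mxE; congr (_ - _); apply: eq_bigr => j _; rewrite !mxE expr2 //.
have r_ge0 i : 0 <= \sum_j V i j ^+ 2 by apply: sumr_ge0 => j _; exact: sqr_ge0.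
have Dpos i : 0 < D i i.
  by have := Dii i; have := Gii_pos i; have := r_ge0 i; lra.
have Dmul (z : 'cV[R]_n) i : (D *m z) i 0 = D i i * z i 0.
  by rewrite {1}Ddef mul_diag_mx mxE ddE.
have Dunit : D \in unitmx.
  rewrite unitmxE Ddef det_diag unitfE; apply/prodf_neq0 => i _.
  by rewrite ddE; exact/lt0r_neq0/Dpos.
have Gu i : (G *m u) i 0 = D i i * u i 0 - (V *m (V^T *m u)) i 0.
  have subE (X Y : 'cV[R]_n) j : (X - Y) j 0 = X j 0 - Y j 0 by rewrite !mxE.
  by rewrite hdec mulmxBl subE Dmul mulmxA.
split.
  have [/existsP [i /orP [/eqP -> | /eqP ->]] | noE] :=
    boolP [exists i, (a == delta_mx i 0) || (a == - delta_mx i 0)].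
  - by left; exists i; left.
  - by left; exists i; right.
  right; exists (V^T *m u) => i.
  set w := V *m (V^T *m u).
  have cE : (invmx D *m V *m (V^T *m u)) i 0 = w i 0 / D i i.
    have := congr1 (fun M : 'cV[R]_n => M i 0) (mulKVmx Dunit w).
    rewrite /= Dmul -mulmxA -/w => <-.
    by rewrite [D i i * _]mulrC mulfK // lt0r_neq0.
  rewrite cE.
  have ne1 : a + delta_mx i 0 != 0.
    apply: contra noE => /eqP h; apply/existsP; exists i; apply/orP; right.
    by apply/eqP; rewrite -(addrK (delta_mx i 0) a) h sub0r.
  have ne2 : a - delta_mx i 0 != 0.
    apply: contra noE => /eqP h; apply/existsP; exists i; apply/orP; left.
    by apply/eqP; rewrite -(subrK (delta_mx i 0) a) h add0r.
  have m1 := amin _ ne1.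
  rewrite intvecD intvec_delta -[delta_mx i 0 in X in _ <= X]scale1r qform_pert // in m1.
  have m2 := amin _ ne2.
  rewrite intvecD intvecN intvec_delta -scaleN1r qform_pert // in m2.
  rewrite Gu Dii in m1 m2.
  have uE : u i 0 = (a i 0)%:~R by rewrite mxE.
  rewrite uE in m1 m2.
  set A := (a i 0)%:~R in m1 m2 *.
  set r := \sum_j V i j ^+ 2 in m1 m2.
  have hr : 0 <= r := r_ge0 i.
  have hd := Dpos i.
  have key : 0 < r \/ w i 0 = 0.
    case: (ltrP 0 r) => [|rle]; [by left | right].
    have r0 : r = 0 by apply/le_anti; rewrite rle hr.
    have V0 j : V i j = 0.
      have := @psumr_eq0P _ _ xpredT (fun j => V i j ^+ 2) (fun j _ => sqr_ge0 (V i j)) r0 j isT.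
      by move/eqP; rewrite sqrf_eq0 => /eqP.
    by rewrite /w mxE; apply: big1 => j _; rewrite V0 mul0r.
  have icase : A <= -1 \/ A = 0 \/ 1 <= A.
    rewrite /A; have [h|h|h] := ltgtP (a i 0) 0.
    - left; have h' : (a i 0 <= - 1)%R by lia.
      rewrite -(ler_int R) intrN in h'; exact: h'.
    - right; right; have h' : (1 <= a i 0)%R by lia.
      rewrite -(ler_int R) in h'; exact: h'.
    - by right; left; rewrite h.
  split.
    rewrite ltr_pdivlMr //.
    case: key => [hk|hk]; rewrite ?hk; case: icase => [hi|[hi|hi]]; rewrite ?hi; nra.
  rewrite ltr_pdivrMr //.
  case: key => [hk|hk]; rewrite ?hk; case: icase => [hi|[hi|hi]]; rewrite ?hi; nra.
move=> Gmin lmin [i0 ->] Gle /eigenvalueP [v vG vnz] lmin_min.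
have s_ge0 (z : 'cV[R]_n) : 0 <= (z^T *m z) 0 0.
  by rewrite mxE; apply: sumr_ge0 => j _; rewrite mxE -expr2 sqr_ge0.
have lpos : 0 < lmin.
  have vT : v^T != 0 by apply: contra vnz => /eqP h; rewrite -(trmxK v) h trmx0.
  have := Gpd _ vT; rewrite /qform trmxK vG -scalemxAl mxE.
  have := s_ge0 v^T; rewrite trmxK => h1 h2.
  rewrite ltNge; apply/negP => hl.
  by have := mulr_le0_ge0 hl h1; lra.
have Ray := @rayleigh R n G lmin Gsym lmin_min u.
have Q : qform G u <= G i0 i0.
  have dz : (delta_mx i0 0 : 'cV[int]_n) != 0.
    apply/negP => /eqP/matrixP/(_ i0 0); rewrite !mxE !eqxx /= => /eqP.
    by rewrite oner_eq0.
  by have := amin (delta_mx i0 0) dz; rewrite intvec_delta hGii.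
rewrite /enorm ler_sqrt; last by apply: divr_ge0; [exact: ltW | exact: ltW].
rewrite ler_pdivlMr //.
have -> : \sum_i u i 0 ^+ 2 = (u^T *m u) 0 0.
  by rewrite mxE; apply: eq_bigr => j _; rewrite !mxE expr2.
rewrite mulrC; apply: (le_trans Ray); exact: Q.
Qed.
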